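(* Let $\Psi=\{\psi_i\}_{i\in I}$ be a lower frame sequence in a separable Hilbert space $\mathcal{H}$ with canonical dual $\widetilde\Psi=\{\widetilde\psi_i\}$, and let $j\in I$. Then: (1) if $\langle\psi_j,\widetilde\psi_j\rangle\ne1$, then $\{\psi_k\}_{k\ne j}$ is a lower frame sequence for $\mathcal{H}$; (2) if $\langle\psi_j,\widetilde\psi_j\rangle=1$, then $\{\psi_k\}_{k\ne j}$ is incomplete in $\mathcal{H}$.
   Context: $I$ is countable. $\mathcal{D}(C_\Psi)=\{f\in\mathcal{H}:\{\langle f,\psi_i\rangle\}_i\in\ell^2\}$, $\mathcal{H}_\Psi:=\overline{\mathcal{D}(C_\Psi)}$, $\pi_{\mathcal{H}_\Psi}$ the orthogonal projection onto $\mathcal{H}_\Psi$. A sequence $\Phi=\{\varphi_i\}$ is a lower frame sequence if there is $A>0$ with $A\|f\|^2\le\sum_i|\langle f,\varphi_i\rangle|^2$ for all $f$ with $\{\langle f,\varphi_i\rangle\}\in\ell^2$. A sequence is complete if its closed linear span is $\mathcal{H}$. With $C^r_\Psi:\mathcal{D}(C_\Psi)\subseteq\mathcal{H}_\Psi\to\ell^2$, $C^r_\Psi f=\{\langle f,\psi_i\rangle\}$, the generalized frame operator $\Gamma_\Psi=(C^r_\Psi)^*C^r_\Psi$ is, for a lower frame sequence, bijective onto $\mathcal{H}_\Psi$ with bounded inverse; the canonical dual is $\widetilde\psi_i:=\Gamma_\Psi^{-1}\pi_{\mathcal{H}_\Psi}\psi_i$. *)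

(* Defs.v *)
From HB Require Import structures.
From mathcomp Require Import all_boot all_order all_algebra.
From mathcomp Require Import all_classical all_reals.
From mathcomp Require Import ereal esum.
From mathcomp Require Import complex.

Set Implicit Arguments.
Unset Strict Implicit.
Unset Printing Implicit Defensive.

Import Order.TTheory GRing.Theory Num.Theory.
Local Open Scope classical_set_scope.
Local Open Scope ring_scope.

Section Hilbert.
Variables (R : realType) (H : lmodType R[i]) (ip : H -> H -> R[i]).

Definition hnorm (x : H) : R := Num.sqrt (complex.Re (ip x x)).

Definition hcauchy (u : nat -> H) : Prop :=
  forall e : R, 0 < e -> exists N : nat, forall m n : nat,
    (N <= m)%N -> (N <= n)%N -> hnorm (u m - u n) < e.

Definition hconverges (u : nat -> H) (x : H) : Prop :=
  forall e : R, 0 < e -> exists N : nat, forall n : nat,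
    (N <= n)%N -> hnorm (u n - x) < e.

Record is_hilbert : Prop := {
  ip_linear : forall (a : R[i]) (x y z : H), ip (a *: x + y) z = a * ip x z + ip y z;
  ip_conjsym : forall x y : H, ip y x = conjc (ip x y);
  ip_pos : forall x : H, 0 <= complex.Re (ip x x);
  ip_def : forall x : H, ip x x = 0 -> x = 0;
  ip_complete : forall u : nat -> H, hcauchy u -> exists x : H, hconverges u x
}.

Definition separable : Prop :=
  exists d : nat -> H, forall (x : H) (e : R), 0 < e ->
    exists n : nat, hnorm (x - d n) < e.

Definition ell2 (I : choiceType) (c : I -> R[i]) : Prop :=
  (\esum_(i in [set: I]) (((Normc.normc (c i)) ^+ 2)%:E) < +oo)%E.

(* domain of the analysis operator C_Psi *)
Definition dom_C (I : choiceType) (psi : I -> H) (f : H) : Prop :=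
  ell2 (fun i => ip f (psi i)).

Definition in_HPsi (I : choiceType) (psi : I -> H) (x : H) : Prop :=
  forall e : R, 0 < e -> exists y : H, dom_C psi y /\ hnorm (x - y) < e.

Definition lower_frame_seq (I : choiceType) (phi : I -> H) : Prop :=
  exists A : R, 0 < A /\ forall f : H, dom_C phi f ->
    ((A * hnorm f ^+ 2)%:E <= \esum_(i in [set: I]) (((Normc.normc (ip f (phi i))) ^+ 2)%:E))%E.

Definition complete_seq (I : choiceType) (phi : I -> H) : Prop :=
  forall (x : H) (e : R), 0 < e ->
    exists (s : seq I) (c : I -> R[i]), hnorm (x - \sum_(i <- s) c i *: phi i) < e.

Definition has_usum (I : choiceType) (a : I -> R[i]) (s : R[i]) : Prop :=
  forall e : R, 0 < e -> exists F0 : seq I, forall F : seq I,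
    uniq F -> {subset F0 <= F} -> Normc.normc (s - \sum_(i <- F) a i) < e.

(* Gamma_Psi f = h, where Gamma_Psi = (C^r_Psi)^* C^r_Psi :
   f in D(C_Psi), h in H_Psi and for all g in D(C_Psi),
   <C g, C f>_{l^2} = <g, h>. *)
Definition frame_op_rel (I : choiceType) (psi : I -> H) (f h : H) : Prop :=
  [/\ dom_C psi f, in_HPsi psi h &
      forall g : H, dom_C psi g ->
        has_usum (fun i => ip g (psi i) * conjc (ip f (psi i))) (ip g h)].

Definition is_proj (I : choiceType) (psi : I -> H) (x p : H) : Prop :=
  in_HPsi psi p /\ forall g : H, in_HPsi psi g -> ip (x - p) g = 0.

(* d = tilde psi_j = Gamma_Psi^{-1} pi_{H_Psi} psi_j *)
Definition canonical_dual (I : choiceType) (psi : I -> H) (j : I) (d : H) : Prop :=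
  exists p : H, is_proj psi (psi j) p /\ frame_op_rel psi d p.

End Hilbert.

Definition remove_one (R : realType) (H : lmodType R[i]) (I : choiceType)
  (psi : I -> H) (j : I) : {k : I | k != j} -> H := fun k => psi (sval k).
Arguments remove_one {R H I} psi j _.

(* Main.v *)
Require Import Defs.
From HB Require Import structures.
From mathcomp Require Import all_boot all_order all_algebra.
From mathcomp Require Import all_classical all_reals.
From mathcomp Require Import ereal esum.
From mathcomp Require Import complex.

From mathcomp Require Import ring lra.
Set Implicit Arguments.
Unset Strict Implicit.
Unset Printing Implicit Defensive.
Import Order.TTheory GRing.Theory Num.Theory.
Local Open Scope classical_set_scope.
Local Open Scope ring_scope.

Section Aux.
Variable R : realType.

Lemma esum_seq_le (T : choiceType) (S : set T) (g : T -> R) (F : seq T) :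
  (forall i, 0 <= g i) -> uniq F -> (forall i, i \in F -> S i) ->
  ((\sum_(i <- F) g i)%:E <= \esum_(i in S) (g i)%:E)%E.
Proof.
move=> g0 uF FS; apply: esum_ge; exists [set` F].
  by split; [exact: finite_seq| move=> i /= /FS].
by rewrite -fsbig_seq // sumEFin.
Qed.

Lemma normc_ge0 (x : R[i]) : 0 <= Normc.normc x.
Proof. by case: x => a b; rewrite /= sqrtr_ge0. Qed.

Lemma normc_conj (x : R[i]) : Normc.normc (conjc x) = Normc.normc x.
Proof. by case: x => a b; rewrite /= sqrrN. Qed.

Lemma mul_conj (x : R[i]) : x * conjc x = ((Normc.normc x) ^+ 2)%:C%C.
Proof.
case: x => a b /=; rewrite sqr_sqrtr ?addr_ge0 ?sqr_ge0 //.
by apply/eqP; rewrite eq_complex /= !expr2; apply/andP; split; apply/eqP; ring.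
Qed.

Lemma normc_real (r : R) : Normc.normc r%:C%C = `|r|.
Proof. by rewrite /= expr0n /= addr0 sqrtr_sqr. Qed.

Lemma normc_sum (T : Type) (s : seq T) (F : T -> R[i]) :
  Normc.normc (\sum_(i <- s) F i) <= \sum_(i <- s) Normc.normc (F i).
Proof.
elim: s => [|x s IH]; first by rewrite !big_nil Normc.normc0.
rewrite !big_cons; apply: le_trans (le_normcD _ _) _; exact: lerD.
Qed.

Lemma usum_real_le (T : choiceType) (a : T -> R) (s : R) :
  (forall i, 0 <= a i) -> has_usum (fun i => (a i)%:C%C) s%:C%C ->
  forall F, uniq F -> \sum_(i <- F) a i <= s.
Proof.
move=> a0 hu F uF; apply/ler_addgt0Pr => e e0.
have [F0 hF0] := hu e e0.
set G2 := [seq i <- undup F0 | i \notin F].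
have uG : uniq (F ++ G2).
  rewrite cat_uniq uF filter_uniq ?undup_uniq // andbT.
  by apply/hasPn => x; rewrite mem_filter => /andP[].
have sub : {subset F0 <= F ++ G2}.
  move=> x xF0; rewrite mem_cat mem_filter mem_undup xF0 andbT.
  by case: (x \in F).
have := hF0 _ uG sub.
rewrite -rmorph_sum -rmorphB normc_real big_cat /=.
have r0 : 0 <= \sum_(i <- G2) a i by apply: sumr_ge0.
move=> h.
have h2 : \sum_(i <- F) a i + \sum_(i <- G2) a i - s <= `|s - (\sum_(i <- F) a i + \sum_(i <- G2) a i)|.
  by rewrite distrC ler_norm.
lra.
Qed.
End Aux.

Section Hil.
Variables (R : realType) (H : lmodType R[i]) (ip : H -> H -> R[i]).
Hypothesis hH : is_hilbert ip.

Lemma conjcD (x y : R[i]) : conjc (x + y) = conjc x + conjc y.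
Proof. by case: x => a b; case: y => c d /=; apply/eqP; rewrite eq_complex /= opprD !eqxx. Qed.
Lemma conjcN (x : R[i]) : conjc (- x) = - conjc x.
Proof. by case: x => a b /=. Qed.
Lemma conjcM (x y : R[i]) : conjc (x * y) = conjc x * conjc y.
Proof. by case: x => a b; case: y => c d /=; apply/eqP; rewrite eq_complex /=; apply/andP; split; apply/eqP; ring. Qed.
Lemma conjcK' (x : R[i]) : conjc (conjc x) = x.
Proof. by case: x => a b /=; rewrite opprK. Qed.
Lemma conjc0' : conjc (0 : R[i]) = 0.
Proof. by rewrite /= oppr0. Qed.
Lemma conjc1' : conjc (1 : R[i]) = 1.
Proof. by rewrite /= oppr0. Qed.

Lemma ip0l y : ip 0 y = 0.
Proof.
have := ip_linear hH 1 0 0 y; rewrite scaler0 addr0 mul1r => h.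
by apply: (addrI (ip 0 y)); rewrite addr0 -h.
Qed.
Lemma ipDl x y z : ip (x + y) z = ip x z + ip y z.
Proof. by have := ip_linear hH 1 x y z; rewrite scale1r mul1r. Qed.
Lemma ipZl a x z : ip (a *: x) z = a * ip x z.
Proof. by have := ip_linear hH a x 0 z; rewrite addr0 ip0l addr0. Qed.
Lemma ipNl x z : ip (- x) z = - ip x z.
Proof. by rewrite -scaleN1r ipZl mulN1r. Qed.
Lemma ipBl x y z : ip (x - y) z = ip x z - ip y z.
Proof. by rewrite ipDl ipNl. Qed.
Lemma ip_suml (T : Type) (s : seq T) (F : T -> H) z :
  ip (\sum_(i <- s) F i) z = \sum_(i <- s) ip (F i) z.
Proof.
elim: s => [|x s IH]; first by rewrite !big_nil ip0l.
by rewrite !big_cons ipDl IH.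
Qed.
Lemma ip0r y : ip y 0 = 0.
Proof. by rewrite (ip_conjsym hH) ip0l conjc0'. Qed.
Lemma ipDr x y z : ip z (x + y) = ip z x + ip z y.
Proof. by rewrite !(ip_conjsym hH _ z) ipDl conjcD. Qed.
Lemma ipBr x y z : ip z (x - y) = ip z x - ip z y.
Proof. by rewrite !(ip_conjsym hH _ z) ipBl conjcD conjcN. Qed.

Lemma ip_real x : ip x x = (complex.Re (ip x x))%:C%C.
Proof.
have := ip_conjsym hH x x; case: (ip x x) => a b /= [] h.
by apply/eqP; rewrite eq_complex /= eqxx /=; apply/eqP; lra.
Qed.

Lemma hnorm0 : hnorm ip 0 = 0.
Proof. by rewrite /hnorm ip0l /= sqrtr0. Qed.

Lemma dom_HPsi (I : choiceType) (psi : I -> H) x : dom_C ip psi x -> in_HPsi ip psi x.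
Proof. by move=> hx e e0; exists x; split => //; rewrite subrr hnorm0. Qed.


Lemma Re_ip_ge0 x : 0 <= complex.Re (ip x x).
Proof. exact: (ip_pos hH). Qed.

Lemma hnorm_pos x : x != 0 -> 0 < hnorm ip x.
Proof.
move=> x0; rewrite /hnorm sqrtr_gt0 lt_def Re_ip_ge0 andbT.
apply: contra x0 => /eqP h; apply/eqP; apply: (ip_def hH).
by rewrite ip_real h.
Qed.

Lemma part2 (I : choiceType) (psi : I -> H) (j : I) (dj : H) :
  canonical_dual ip psi j dj -> ip (psi j) dj = 1 ->
  ~ complete_seq ip (remove_one psi j).
Proof.
move=> [p [[HPp orth] [domdj _ hus]]] e1.
have e2 : ip dj p = 1.
  have := orth dj (dom_HPsi domdj); rewrite ipBl => /eqP; rewrite subr_eq0 => /eqP h.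
  by rewrite (ip_conjsym hH) -h e1 conjc1'.
have hu := hus dj domdj; rewrite e2 in hu.
set a := fun i => Normc.normc (ip dj (psi i)) ^+ 2.
have hu' : has_usum (fun i => (a i)%:C%C) (1%:C%C).
  have -> : (fun i => (a i)%:C%C) = (fun i => ip dj (psi i) * conjc (ip dj (psi i))).
    by apply: funext => i; rewrite mul_conj.
  exact: hu.
have a0 : forall i, 0 <= a i by move=> i; rewrite /a sqr_ge0.
have aj : a j = 1.
  by rewrite /a (ip_conjsym hH) e1 conjc1' Normc.normc1 expr1n.
have orthk : forall k, k != j -> ip (psi k) dj = 0.
  move=> k kj.
  have := usum_real_le a0 hu' (F := [:: j; k]); rewrite /= inE eq_sym kj => /(_ isT).
  rewrite !big_cons big_nil addr0 aj => hk.
  have ak : a k = 0 by apply/eqP; rewrite eq_le a0 andbT; lra.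
  move: ak; rewrite /a => /eqP; rewrite sqrf_eq0 => /eqP /Normc.eq0_normc h.
  by rewrite (ip_conjsym hH) h conjc0'.
have dj0 : dj != 0.
  by apply/eqP => h; move: e1; rewrite h ip0r => /eqP; rewrite eq_sym oner_eq0.
move=> /(_ dj (hnorm ip dj) (hnorm_pos dj0)) [s [c]].
set v := \sum_(i <- s) _.
have hv1 : ip v dj = 0.
  rewrite /v ip_suml big1_seq // => i _.
  by rewrite ipZl /remove_one orthk ?mulr0 //; case: i.
have hv2 : ip dj v = 0 by rewrite (ip_conjsym hH) hv1 conjc0'.
have : complex.Re (ip dj dj) <= complex.Re (ip (dj - v) (dj - v)).
  rewrite ipBl !ipBr hv1 hv2 !subr0.
  have := Re_ip_ge0 v; case: (ip v v) => a1 b1; case: (ip dj dj) => a2 b2 /=.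
  lra.
rewrite /hnorm => h; apply/negP; rewrite -leNgt.
by rewrite ler_sqrt // Re_ip_ge0.
Qed.

End Hil.
Section Aux2.
Variable R : realType.

Lemma fin_ge0 (x : \bar R) : (0 <= x)%E -> (x < +oo)%E -> exists2 r : R, 0 <= r & x = r%:E.
Proof. by case: x => // r r0 _; exists r. Qed.

Lemma esum_sig (I : choiceType) (j : I) (g : I -> R) :
  \esum_(k in [set: {k : I | k != j}]) (g (sval k))%:E = \esum_(i in ~` [set j]) (g i)%:E.
Proof.
rewrite -(esum_image setT sval (fun i => (g i)%:E)); last by move=> x y _ _; exact: val_inj.
congr esum; apply/seteqP; split => x /=.
  by case=> -[y yj] _ <- /= h; move: yj; rewrite h eqxx.
move=> xj; have xj' : x != j by apply/eqP.
by exists (exist _ x xj').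
Qed.

Lemma esum_split (I : choiceType) (j : I) (g : I -> R) : (forall i, 0 <= g i) ->
  \esum_(i in [set: I]) (g i)%:E = ((g j)%:E + \esum_(i in ~` [set j]) (g i)%:E)%E.
Proof.
move=> g0; rewrite (esumID [set j]); last by move=> i _; rewrite lee_fin.
by rewrite !setTI esum_set1 // lee_fin.
Qed.

Lemma amgm (a b t : R) : 0 < t -> a * b <= (t * a ^+ 2 + b ^+ 2 / t) / 2.
Proof.
move=> t0; set q := b ^+ 2 / t.
have hq : q * t = b ^+ 2 by rewrite /q mulfVK // gt_eqF.
have := sqr_ge0 (t * a - b).
move=> hs; rewrite -(@ler_pM2r _ t) //; nra.
Qed.


Lemma amgm_inv (u S B : R) : 0 <= u -> 0 <= S -> 0 <= B ->
  (forall t, 0 < t -> u <= (t * S + B / t) / 2) -> u ^+ 2 <= S * B.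
Proof.
move=> u0 S0 B0 h.
have [->|up] := eqVneq u 0; first by rewrite expr0n /= mulr_ge0.
have upos : 0 < u by rewrite lt_def up u0.
have [Sz|Sp] := eqVneq S 0.
  have t0 : 0 < (B + 1) / u by rewrite divr_gt0 // ltr_wpDl.
  have := h _ t0; rewrite Sz mulr0 add0r.
  have -> : B / ((B + 1) / u) = (B / (B + 1)) * u.
    by field; rewrite gt_eqF // ?ltr_wpDl // andbT; rewrite -[_ != _]/(u != 0) up.
  have hr : B / (B + 1) < 1 by rewrite ltr_pdivrMr ?ltr_wpDl // mul1r ltrDl.
  move=> hu; exfalso; nra.
have Spos : 0 < S by rewrite lt_def Sp S0.
have t0 : 0 < u / S by rewrite divr_gt0.
have := h _ t0.
have -> : u / S * S = u by rewrite mulfVK // gt_eqF.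
set q := B / (u / S).
have hq : q * u = B * S by rewrite /q; field; rewrite !gt_eqF.
move=> hu; nra.
Qed.
End Aux2.

Section P1.
Variables (R : realType) (H : lmodType R[i]) (ip : H -> H -> R[i]).
Hypothesis hH : is_hilbert ip.

Lemma part1 (I : choiceType) (psi : I -> H) (j : I) (dj : H) :
  lower_frame_seq ip psi -> canonical_dual ip psi j dj -> ip (psi j) dj != 1 ->
  lower_frame_seq ip (remove_one psi j).
Proof.
move=> [A [A0 hA]] [p [[HPp orth] [domdj _ hus]]] w1.
set w := ip (psi j) dj.
set hb := fun i => Normc.normc (ip dj (psi i)) ^+ 2.
have hb0 : forall i, 0 <= hb i by move=> i; exact: sqr_ge0.
have [B B0 eB] : exists2 B : R, 0 <= B & \esum_(i in [set: I]) (hb i)%:E = B%:E.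
  apply: fin_ge0; last exact: domdj.
  by apply: esum_ge0 => i _; rewrite lee_fin.
set cc := Normc.normc (1 - w) ^+ 2.
have cc0 : 0 < cc.
  rewrite /cc exprn_gt0 // lt_def normc_ge0 andbT.
  apply/negP => /eqP /Normc.eq0_normc /eqP; rewrite subr_eq0 eq_sym.
  by apply/negP.
have K0 : 0 < 1 + B / cc by have := divr_ge0 B0 (ltW cc0); lra.
exists (A / (1 + B / cc)); split; first by rewrite divr_gt0.
move=> f domf'.
set g := fun i => Normc.normc (ip f (psi i)) ^+ 2.
have g0 : forall i, 0 <= g i by move=> i; exact: sqr_ge0.
have eS : \esum_(k in [set: {k : I | k != j}])
   ((Normc.normc (ip f (remove_one psi j k))) ^+ 2)%:E =
   \esum_(i in ~` [set j]) (g i)%:E := esum_sig j g.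
have [S' S'0 eS'] : exists2 S' : R, 0 <= S' & \esum_(i in ~` [set j]) (g i)%:E = S'%:E.
  apply: fin_ge0; first by apply: esum_ge0 => i _; rewrite lee_fin.
  by rewrite -eS; exact: domf'.
have eT := esum_split j g0.
have domf : dom_C ip psi f.
  rewrite /dom_C /ell2; change (\esum_(i in [set: I]) (g i)%:E < +oo)%E.
  by rewrite eT eS' -EFinD ltry.
have hAf : ((A * hnorm ip f ^+ 2)%:E <= \esum_(i in [set: I]) (g i)%:E)%E.
  exact: hA f domf.
rewrite eT eS' -EFinD lee_fin in hAf.
have claim : g j * cc <= S' * B.
  have xjp : ip f p = ip f (psi j).
    have := orth f (dom_HPsi hH domf); rewrite (ipBl hH) => /eqP.
    rewrite subr_eq0 => /eqP h.
    by rewrite (ip_conjsym hH p f) (ip_conjsym hH (psi j) f) h.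
  have wj : w = conjc (ip dj (psi j)) := ip_conjsym hH dj (psi j).
  set u := Normc.normc (ip f (psi j)) * Normc.normc (1 - w).
  have -> : g j * cc = u ^+ 2 by rewrite /g /cc /u exprMn.
  apply: amgm_inv => //; first by rewrite mulr_ge0 ?normc_ge0.
  move=> t t0; apply/ler_addgt0Pr => e e0.
  have [F0 hF0] := hus f domf e e0.
  set F1 := [seq i <- undup F0 | i != j].
  have uF1 : uniq F1 by rewrite filter_uniq ?undup_uniq.
  have uF : uniq (j :: F1) by rewrite /= mem_filter eqxx /= uF1.
  have sub : {subset F0 <= j :: F1}.
    by move=> x xF; rewrite inE mem_filter mem_undup xF andbT; case: (x == j).
  have := hF0 _ uF sub; rewrite big_cons xjp -wj.
  set z := \sum_(i <- F1) _.
  have -> : ip f (psi j) - (ip f (psi j) * w + z) = ip f (psi j) * (1 - w) - z.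
    by rewrite mulrBr mulr1 opprD addrA.
  move=> hlt.
  have tri : u <= Normc.normc (ip f (psi j) * (1 - w) - z) + Normc.normc z.
    rewrite /u -Normc.normcM.
    by have := le_normcD (ip f (psi j) * (1 - w) - z) z; rewrite subrK.
  have hz : Normc.normc z <= \sum_(i <- F1) (t * g i + hb i / t) / 2.
    apply: le_trans (normc_sum _ _) _; apply: ler_sum => i _.
    by rewrite Normc.normcM normc_conj; exact: amgm.
  have hz2 : \sum_(i <- F1) (t * g i + hb i / t) / 2 =
      (t * \sum_(i <- F1) g i + (\sum_(i <- F1) hb i) / t) / 2.
    by rewrite -mulr_suml big_split /= -mulr_sumr -mulr_suml.
  have hg : \sum_(i <- F1) g i <= S'.
    have := esum_seq_le (S := ~` [set j]) g0 uF1.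
    rewrite eS' lee_fin; apply => i; rewrite mem_filter => /andP[ij _] /= h.
    by move: ij; rewrite h eqxx.
  have hh : \sum_(i <- F1) hb i <= B.
    by have := esum_seq_le (S := [set: I]) hb0 uF1; rewrite eB lee_fin; apply.
  have h1 : t * \sum_(i <- F1) g i <= t * S' by rewrite ler_pM2l.
  have h2 : (\sum_(i <- F1) hb i) / t <= B / t by rewrite ler_pM2r ?invr_gt0.
  lra.
rewrite /dom_C /ell2 eS eS' lee_fin.
rewrite mulrAC ler_pdivrMr //.
have : g j <= S' * B / cc by rewrite ler_pdivlMr.
have -> : S' * (1 + B / cc) = S' + S' * B / cc by rewrite mulrDr mulr1 mulrA.
lra.
Qed.
End P1.

Unset Implicit Arguments.
Local Close Scope classical_set_scope.

Theorem theorem6p15 (R : realType) (H : lmodType R[i]) (ip : H -> H -> R[i])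
  (hH : is_hilbert ip) (hsep : separable ip)
  (I : countType) (psi : I -> H) (hpsi : lower_frame_seq ip psi)
  (j : I) (dj : H) (hdj : canonical_dual ip psi j dj) :
  (ip (psi j) dj != 1 -> lower_frame_seq ip (remove_one psi j)) /\
  (ip (psi j) dj = 1 -> ~ complete_seq ip (remove_one psi j)).
Proof.
split.
  by move=> w1; exact: (part1 hH hpsi hdj w1).
by move=> w1; exact: (part2 hH hdj w1).
Qed.
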